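(* Let $(p,q,k)$ and $(p',q',k')$ be two distinct integer triples satisfying $(k+\tfrac12)^2<p^2+q^2$ and $(k'+\tfrac12)^2<p'^2+q'^2$, and suppose $\alpha(p,q,k)=\alpha(p',q',k')$. Then $pq'-qp'=0$, i.e. $(p,q)$ and $(p',q')$ are collinear.
   Context: For integers $p,q,k$ with $(k+\tfrac12)^2<p^2+q^2$, put $\lambda=\sqrt{p^2+q^2-(k+\tfrac12)^2}>0$ and let $\alpha(p,q,k)\in\mathbb R/2\pi\mathbb Z$ be the unique angle with $e^{i\alpha(p,q,k)}(p+qi)=k+\tfrac12+\lambda i$ (it exists since both sides have the same modulus). *)

(* Defs.v *)
From Stdlib Require Import Reals ZArith.
Open Scope R_scope.

Definition admissible (p q k : Z) : Prop :=
  (IZR k + 1/2)^2 < IZR p ^ 2 + IZR q ^ 2.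

Definition lam (p q k : Z) : R :=
  sqrt (IZR p ^ 2 + IZR q ^ 2 - (IZR k + 1/2)^2).

(* [is_alpha p q k a] : the real number a represents alpha(p,q,k), i.e.
   e^{i a} (p + q i) = (k + 1/2) + lam i, written in real and imaginary parts. *)
Definition is_alpha (p q k : Z) (a : R) : Prop :=
  cos a * IZR p - sin a * IZR q = IZR k + 1/2 /\
  sin a * IZR p + cos a * IZR q = lam p q k.

(* Main.v *)
Require Import Defs.
From Stdlib Require Import Reals ZArith Lia Lra Psatz.
Open Scope R_scope.

Lemma descent (M : Z) : (M mod 4 = 3)%Z ->
  forall n : nat, forall D T : Z, (Z.abs D <= Z.of_nat n)%Z -> (M * D^2 = T^2)%Z -> D = 0%Z.
Proof.
  intros HM n. induction n as [|n IH]; intros D T HD HE; [lia|].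
  destruct (Z.even D) eqn:ED.
  - apply Z.even_spec in ED. destruct ED as [a Ha].
    destruct (Z.even T) eqn:ET.
    + apply Z.even_spec in ET. destruct ET as [b Hb]. subst.
      assert (M * a^2 = b^2)%Z by nia.
      destruct (Z.eq_dec a 0); [lia|].
      assert (a = 0%Z) by (apply (IH a b); [lia|assumption]). lia.
    + exfalso. assert (Z.odd T = true) by (rewrite <- Z.negb_even, ET; reflexivity).
      apply Z.odd_spec in H. destruct H as [b Hb]. subst. nia.
  - exfalso. assert (Z.odd D = true) by (rewrite <- Z.negb_even, ED; reflexivity).
    apply Z.odd_spec in H. destruct H as [a Ha].
    pose proof (Z.mod_pos_bound M 4 ltac:(lia)).
    pose proof (Z.div_mod M 4 ltac:(lia)).
    set (m := (M / 4)%Z) in *. 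
    destruct (Z.even T) eqn:ET.
    + apply Z.even_spec in ET. destruct ET as [b Hb]. subst. nia.
    + assert (Z.odd T = true) by (rewrite <- Z.negb_even, ET; reflexivity).
      apply Z.odd_spec in H1. destruct H1 as [b Hb]. subst. nia.
Qed.

Theorem lemma2 (p q k p' q' k' : Z) :
  (p, q, k) <> (p', q', k') ->
  admissible p q k -> admissible p' q' k' ->
  (exists a : R, is_alpha p q k a /\ is_alpha p' q' k' a) ->
  (p * q' - q * p')%Z = 0%Z.
Proof.
  intros _ Ha Ha' [a [[H1 H2] [H3 H4]]].
  unfold admissible in *.
  set (l := lam p q k) in *. set (l' := lam p' q' k') in *.
  set (x := IZR k + 1/2) in *. set (x' := IZR k' + 1/2) in *.
  assert (HL : l * l = IZR p ^ 2 + IZR q ^ 2 - x^2).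
  { unfold l, lam. apply sqrt_sqrt. fold x. lra. }
  pose proof (sin2_cos2 a) as Hsc. unfold Rsqr in Hsc.
  set (c := cos a) in *. set (s := sin a) in *.
  assert (HD : IZR p * IZR q' - IZR q * IZR p' = x*l' - x'*l).
  { rewrite <- H1, <- H2, <- H3, <- H4.
    transitivity ((s*s+c*c)*(IZR p * IZR q' - IZR q * IZR p')); [rewrite Hsc; ring|ring]. }
  assert (HE : IZR p * IZR p' + IZR q * IZR q' = x*x' + l*l').
  { rewrite <- H1, <- H2, <- H3, <- H4.
    transitivity ((s*s+c*c)*(IZR p * IZR p' + IZR q * IZR q')); [rewrite Hsc; ring|ring]. }
  set (D := (p * q' - q * p')%Z).
  set (E := (p * p' + q * q')%Z).
  set (N := (p*p + q*q)%Z).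
  assert (HDr : IZR D = x*l' - x'*l) by (unfold D; rewrite minus_IZR, !mult_IZR; exact HD).
  assert (HEr : IZR E = x*x' + l*l') by (unfold E; rewrite plus_IZR, !mult_IZR; exact HE).
  assert (HNr : IZR N = x*x + l*l) by (unfold N; rewrite plus_IZR, !mult_IZR; lra).
  assert (Key : (l*l)*(IZR D)^2 = (x * IZR E - x' * IZR N)^2).
  { rewrite HDr, HEr, HNr. ring. }
  assert (KeyZ : ((4*N - (2*k+1)^2) * D^2 = ((2*k+1)*E - (2*k'+1)*N)^2)%Z).
  { rewrite !Z.pow_2_r. apply eq_IZR. repeat rewrite ?mult_IZR, ?minus_IZR, ?plus_IZR.
    assert (HN2 : IZR N = IZR p ^2 + IZR q ^2) by (unfold N; rewrite plus_IZR, !mult_IZR; ring).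
    replace (2 * IZR k + 1) with (2*x) by (unfold x; field).
    replace (2 * IZR k' + 1) with (2*x') by (unfold x'; field).
    rewrite HL, <- HN2 in Key.
    simpl. simpl in Key. nra. }
  apply (descent (4*N - (2*k+1)^2)) with (n := Z.to_nat (Z.abs D)) (T := ((2*k+1)*E - (2*k'+1)*N)%Z).
  - replace (4 * N - (2 * k + 1) ^ 2)%Z with ((N - k*k - k - 1) * 4 + 3)%Z by ring.
    rewrite Z.add_comm, Z.mod_add by lia. reflexivity.
  - lia.
  - exact KeyZ.
Qed.
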